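(* Let $m\ge 2$, $\boldsymbol{\mu}\in\mathbb{R}^m$, let $\boldsymbol{\Lambda}\in\mathbb{R}^{m\times m}$ be invertible, $\boldsymbol{\Sigma}=\boldsymbol{\Lambda}\boldsymbol{\Lambda}^T$, and let $\boldsymbol{\Sigma}^{-1/2}$ denote the symmetric positive definite inverse square root of $\boldsymbol{\Sigma}$. Let $\mathcal{R}$ be a scalar random variable with $\mathcal{R}>0$ almost surely, and let $\boldsymbol{\mathcal{V}}\sim vMF(\boldsymbol{\mu}_v,\tau)$ be independent of $\mathcal{R}$. Let $\boldsymbol{\mathcal{X}}=\boldsymbol{\mu}+\mathcal{R}\boldsymbol{\Lambda}\boldsymbol{\mathcal{V}}$ and $T=(\boldsymbol{\mathcal{X}}-\boldsymbol{\mu})^T\boldsymbol{\Sigma}^{-1}(\boldsymbol{\mathcal{X}}-\boldsymbol{\mu})$. Then $T$ is independent of the whitened random vector $\boldsymbol{\Sigma}^{-1/2}(\boldsymbol{\mathcal{X}}-\boldsymbol{\mu})/\sqrt{T}$.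
   Context: The von Mises–Fisher distribution $vMF(\boldsymbol{\mu}_v,\tau)$ on the unit sphere $\mathbb{S}^{m-1}=\{\mathbf{x}\in\mathbb{R}^m:\mathbf{x}^T\mathbf{x}=1\}$, with mean direction $\boldsymbol{\mu}_v\in\mathbb{S}^{m-1}$ and concentration $\tau>0$, has density with respect to the surface measure on $\mathbb{S}^{m-1}$ proportional to $\exp(\tau\boldsymbol{\mu}_v^T\mathbf{v})$. *)

(* Defs.v *)
From HB Require Import structures.
From mathcomp Require Import all_boot all_order all_algebra.
From mathcomp Require Import all_classical all_reals all_analysis.

Set Implicit Arguments.
Unset Strict Implicit.
Unset Printing Implicit Defensive.

Import Order.TTheory GRing.Theory Num.Theory.
Local Open Scope classical_set_scope.
Local Open Scope ring_scope.

(* Points of R^m are represented as m.-tuple R (which carries the library's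
   product sigma-algebra); tcol / ctup convert to/from column vectors. *)
Definition tcol (R : realType) (m : nat) (t : m.-tuple R) : 'cV[R]_m :=
  \col_i tnth t i.

Definition ctup (R : realType) (m : nat) (c : 'cV[R]_m) : m.-tuple R :=
  [tuple c i 0 | i < m].

(* Lebesgue measure on R^n = n.-tuple R, defined by iterated integration
   (Tonelli) of the indicator of the set, from the library Lebesgue
   measure on R. *)
Fixpoint lebesgue_tuple (R : realType) (n : nat) : set (n.-tuple R) -> \bar R :=
  match n with
  | 0%N => fun A => (\1_A [tuple] : R)%:E
  | n'.+1 => fun A =>
      (\int[@lebesgue_measure R]_x
         @lebesgue_tuple R n' [set t : n'.-tuple R | A [tuple of x :: t]])%E
  end.

Definition sphere (R : realType) (m : nat) : set (m.-tuple R) :=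
  [set v | \sum_(i < m) tnth v i ^+ 2 = 1].

(* surface (Hausdorff) measure on S^{m-1}, via the cone-measure formula
   sigma(A) = m * Leb_m { t v : 0 < t <= 1, v in A } for A subset S^{m-1}. *)
Definition cone_set (R : realType) (m : nat) (A : set (m.-tuple R)) :
  set (m.-tuple R) :=
  [set x | exists (t : R) (v : m.-tuple R),
      [/\ 0 < t <= 1, (A `&` @sphere R m) v & x = ctup (t *: tcol v)]].

Definition sphere_measure (R : realType) (m : nat) (A : set (m.-tuple R)) : \bar R :=
  (m%:R%:E * @lebesgue_tuple R m (cone_set A))%E.

Definition has_vMF_law d (Omega : measurableType d) (R : realType) (m : nat)
  (P : probability Omega R) (V : Omega -> m.-tuple R) (mu_v : 'cV[R]_m) (tau : R) :=
  exists c : R, 0 < c /\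
    forall B : set (m.-tuple R), measurable B ->
      P (V @^-1` B) =
      (c%:E * \int[@sphere_measure R m]_(v in B `&` @sphere R m)
                 (expR (tau * (mu_v^T *m tcol v) 0 0))%:E)%E.

Definition independent d (Omega : measurableType d) (R : realType)
  (P : probability Omega R) d1 d2 (T1 : measurableType d1) (T2 : measurableType d2)
  (X : Omega -> T1) (Y : Omega -> T2) :=
  forall (A : set T1) (B : set T2), measurable A -> measurable B ->
    P (X @^-1` A `&` Y @^-1` B) = (P (X @^-1` A) * P (Y @^-1` B))%E.

(* Main.v *)
Require Import Defs.
From HB Require Import structures.
From mathcomp Require Import all_boot all_order all_algebra.
From mathcomp Require Import all_classical all_reals all_analysis.

Import Order.TTheory GRing.Theory Num.Theory.
Local Open Scope classical_set_scope.
Local Open Scope ring_scope.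

Lemma mulmx_col_tnth (R : realType) m (M : 'M[R]_m) (t : m.-tuple R) i :
  (M *m tcol t) i 0 = \sum_j M i j * tnth t j.
Proof. rewrite mxE; apply: eq_bigr => j _; by rewrite mxE. Qed.

Lemma quad_form (R : realType) m (L : 'M[R]_m) (v : m.-tuple R) (r : R) :
  L \in unitmx ->
  (((r *: (L *m tcol v)))^T *m invmx (L *m L^T) *m (r *: (L *m tcol v))) 0 0
  = r ^+ 2 * \sum_(i < m) tnth v i ^+ 2.
Proof.
move=> uL.
have uLL : L *m L^T \in unitmx by rewrite unitmx_mul uL unitmx_tr uL.
have key : L^T *m invmx (L *m L^T) *m L = 1%:M.
  transitivity (invmx L *m ((L *m L^T) *m invmx (L *m L^T)) *m L).
    by rewrite !mulmxA mulVmx // mul1mx.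
  by rewrite mulmxV // mulmx1 mulVmx.
have -> : (r *: (L *m tcol v))^T = r *: (L *m tcol v)^T.
  by apply/matrixP => i j; rewrite !mxE.
rewrite -!scalemxAl -!scalemxAr scalerA mxE trmx_mul.
rewrite -!mulmxA (mulmxA L^T) (mulmxA (L^T *m _)) key mul1mx.
rewrite mxE expr2; congr (_ * _); apply: eq_bigr => j _.
by rewrite !mxE expr2.
Qed.

Theorem proposition2 (R : realType) (m : nat) (d : measure_display)
  (Omega : measurableType d) (P : probability Omega R)
  (mu : 'cV[R]_m) (Lambda : 'M[R]_m) (Sinvhalf : 'M[R]_m)
  (mu_v : 'cV[R]_m) (tau : R)
  (Rv : Omega -> R) (V : Omega -> m.-tuple R) :
  (2 <= m)%N ->
  Lambda \in unitmx ->
  (* Sinvhalf is the symmetric positive definite inverse square root of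
     Sigma = Lambda Lambda^T *)
  Sinvhalf^T = Sinvhalf ->
  (forall x : 'cV[R]_m, x != 0 -> 0 < (x^T *m Sinvhalf *m x) 0 0) ->
  Sinvhalf *m Sinvhalf = invmx (Lambda *m Lambda^T) ->
  measurable_fun setT Rv ->
  measurable_fun setT V ->
  {ae P, forall w, 0 < Rv w} ->
  \sum_(i < m) tnth (ctup mu_v) i ^+ 2 = 1 ->
  0 < tau ->
  has_vMF_law P V mu_v tau ->
  independent P Rv V ->
  let X := fun w => mu + Rv w *: (Lambda *m tcol (V w)) in
  let T := fun w => ((X w - mu)^T *m invmx (Lambda *m Lambda^T) *m (X w - mu)) 0 0 in
  let W := fun w => ctup ((Num.sqrt (T w))^-1 *: (Sinvhalf *m (X w - mu))) in
  independent P T W.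
Proof.
move=> hm uL _ _ _ mRv mV hae hmu htau [c [c0 hvmf]] hind X T W.
pose s := fun t : m.-tuple R => \sum_(i < m) tnth t i ^+ 2.
pose g := fun t : m.-tuple R => ctup ((Sinvhalf *m Lambda) *m tcol t).
have ms : measurable_fun setT s.
  apply: measurable_sum => i; apply: measurable_realfun.measurable_funX; exact: measurable_tnth.
have mg : measurable_fun setT g.
  apply/measurable_fun_tnthP => i.
  have -> : (@tnth m R ^~ i \o g) = (fun t => \sum_(j < m) (Sinvhalf *m Lambda) i j * tnth t j).
    by apply: funext => t; rewrite /= tnth_mktuple mulmx_col_tnth.
  apply: measurable_sum => j; apply: measurable_realfun.measurable_funM.
    exact: measurable_cst.
  exact: measurable_tnth.
have XE : forall w, X w - mu = Rv w *: (Lambda *m tcol (V w)).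
  by move=> w; rewrite /X addrAC subrr add0r.
have TE : forall w, T w = Rv w ^+ 2 * s (V w).
  by move=> w; rewrite /T XE quad_form.
have T0 : forall w, 0 <= T w.
  move=> w; rewrite TE; apply: mulr_ge0; first exact: sqr_ge0.
  by apply: sumr_ge0 => i _; exact: sqr_ge0.
have mT : measurable_fun setT T.
  have -> : T = (fun w => Rv w ^+ 2 * s (V w)) by apply: funext => w; exact: TE.
  apply: measurable_realfun.measurable_funM; first exact: measurable_realfun.measurable_funX.
  exact: measurableT_comp ms mV.
have mW : measurable_fun setT W.
  apply/measurable_fun_tnthP => i.
  have -> : (@tnth m R ^~ i \o W) = (fun w => T w `^ (- 2^-1) * Rv w *
      \sum_(j < m) (Sinvhalf *m Lambda) i j * tnth (V w) j).
    apply: funext => w; rewrite /= /W tnth_mktuple powRN powR12_sqrt //.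
    by rewrite mxE XE -scalemxAr mxE mulmxA mulmx_col_tnth mulrA.
  apply: measurable_realfun.measurable_funM; first apply: measurable_realfun.measurable_funM => //.
    exact: measurableT_comp (measurable_realfun.measurable_powR _) mT.
  apply: measurable_sum => j; apply: measurable_realfun.measurable_funM.
    exact: measurable_cst.
  exact: measurableT_comp (measurable_tnth j) mV.
have good : forall w, 0 < Rv w -> s (V w) = 1 -> T w = Rv w ^+ 2 /\ W w = g (V w).
  move=> w r0 s1; have Tw : T w = Rv w ^+ 2 by rewrite TE s1 mulr1.
  split => //; rewrite /W /g; congr ctup.
  rewrite Tw sqrtr_sqr gtr0_norm // XE -scalemxAr scalerA mulVf ?gt_eqF //.
  by rewrite scale1r mulmxA.
move: hae => [N1 [mN1 PN1 sN1]].
pose N2 := V @^-1` (~` @sphere R m).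
have msph : measurable (@sphere R m).
  have -> : @sphere R m = setT `&` s @^-1` [set 1] by rewrite setTI.
  exact: ms measurableT _ (measurable_set1 _).
have mN2 : measurable N2.
  rewrite /N2 -[_ @^-1` _]setTI; apply: mV => //; exact: measurableC.
have PN2 : P N2 = 0%E.
  have h0 := hvmf _ measurable0.
  rewrite preimage_set0 measure0 set0I in h0.
  by rewrite /N2 hvmf ?setICl -?h0 //; exact: measurableC.
pose N := N1 `|` N2.
have mN : measurable N by exact: measurableU.
have PN : P N = 0%E by exact: null_set_setU.
have goodN : forall w, ~ N w -> 0 < Rv w /\ s (V w) = 1.
  move=> w /not_orP [n1 n2]; split.
    by apply: contrapT => h; apply: n1; apply: sN1.
  by apply: contrapT => h; apply: n2.
have nulleq : forall Y : set Omega, measurable Y -> P Y = P (Y `&` ~` N).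
  move=> Y mY; have mYN : measurable (Y `&` ~` N) by apply: measurableI => //; exact: measurableC.
  apply/eqP; rewrite eq_le; apply/andP; split.
    rewrite -(measureU0 mYN mN PN); apply: le_measure; rewrite ?inE //.
      exact: measurableU.
    by move=> w Yw; case: (pselect (N w)) => Nw; [right|left].
  by apply: le_measure; rewrite ?inE //; exact: subIsetl.
move=> A B mA mB.
pose A' := (fun r : R => r ^+ 2) @^-1` A.
pose B' := g @^-1` B.
have mA' : measurable A'.
  rewrite /A' -[_ @^-1` _]setTI; exact: measurable_realfun.exprn_measurable measurableT _ mA.
have mB' : measurable B' by rewrite /B' -[_ @^-1` _]setTI; exact: mg.
have mTA : measurable (T @^-1` A) by rewrite -[_ @^-1` _]setTI; exact: mT.
have mWB : measurable (W @^-1` B) by rewrite -[_ @^-1` _]setTI; exact: mW.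
have mRA : measurable (Rv @^-1` A') by rewrite -[_ @^-1` _]setTI; exact: mRv.
have mVB : measurable (V @^-1` B') by rewrite -[_ @^-1` _]setTI; exact: mV.
have E1 : T @^-1` A `&` ~` N = Rv @^-1` A' `&` ~` N.
  apply/seteqP; split => w [h1 h2]; split => //;
    have [p1 p2] := goodN w h2; have [t1 _] := good w p1 p2;
    by move: h1; rewrite /preimage /A' /= t1.
have E2 : W @^-1` B `&` ~` N = V @^-1` B' `&` ~` N.
  apply/seteqP; split => w [h1 h2]; split => //;
    have [p1 p2] := goodN w h2; have [_ t1] := good w p1 p2;
    by move: h1; rewrite /preimage /B' /= t1.
have E3 : (T @^-1` A `&` W @^-1` B) `&` ~` N = (Rv @^-1` A' `&` V @^-1` B') `&` ~` N.
  by rewrite -[~` N]setIid setIACA E1 E2 setIACA.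
rewrite (nulleq _ (measurableI _ _ mTA mWB)) E3 -(nulleq _ (measurableI _ _ mRA mVB)).
rewrite hind // (nulleq _ mTA) E1 -(nulleq _ mRA) (nulleq _ mWB) E2 -(nulleq _ mVB).
by [].
Qed.
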